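(* Let $\varepsilon\geq 0$, $\delta\in[0,1]$ and $k\ge 1$ an integer. The class of $(\varepsilon,\delta)$-differentially private mechanisms satisfies $\big((k-2i)\varepsilon,\;1-(1-\delta)^k(1-\delta_i)\big)$-differential privacy under $k$-fold adaptive composition, for every $i\in\{0,1,\ldots,\lfloor k/2\rfloor\}$, where $$\delta_i=\frac{\sum_{\ell=0}^{i-1}\binom{k}{\ell}\big(e^{(k-\ell)\varepsilon}-e^{(k-2i+\ell)\varepsilon}\big)}{(1+e^{\varepsilon})^k}.$$
   Context: Databases carry a symmetric neighbor relation $\sim$. A randomized mechanism $M$ (taking a database and a query to a random output) is $(\varepsilon,\delta)$-differentially private if for all $D\sim D'$ (and any query) and all measurable output sets $S$, $\mathbb P(M(D)\in S)\le e^{\varepsilon}\mathbb P(M(D')\in S)+\delta$. $k$-fold adaptive composition experiment with a class $\mathcal M$ of mechanisms and a bit $b\in\{0,1\}$ unknown to the adversary: an adversary $\mathcal A$ with internal randomness $R$, at each step $i=1,\dots,k$, chooses (as a function of $R$ and the previous outputs $y_1,\dots,y_{i-1}$) neighboring databases $D^{i,0}\sim D^{i,1}$, a query $q_i$ and a mechanism $M_i\in\mathcal M$, and receives $y_i=M_i(D^{i,b},q_i)$; the internal randomness of the mechanisms is independent across steps and of $R$. The view is $V^b=(R,Y_1^b,\dots,Y_k^b)$. The class $\mathcal M$ satisfies $(\varepsilon',\delta')$-differential privacy under $k$-fold adaptive composition if for every adversary and every measurable set $S$ of views, $\mathbb P(V^0\in S)\le e^{\varepsilon'}\mathbb P(V^1\in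 S)+\delta'$ and $\mathbb P(V^1\in S)\le e^{\varepsilon'}\mathbb P(V^0\in S)+\delta'$. *)

(* Defs.v *)
From HB Require Import structures.
From mathcomp Require Import all_boot all_order all_algebra.
From mathcomp Require Import all_classical all_reals all_analysis measurable_realfun.
Set Implicit Arguments. Unset Strict Implicit. Unset Printing Implicit Defensive.
Import Order.TTheory GRing.Theory Num.Theory.
Local Open Scope classical_set_scope.
Local Open Scope ring_scope.

Section DP.
Context {R : realType} {DB Q : Type} {dY : measure_display} {Y : measurableType dY}.

Definition mechanism := DB -> Q -> probability Y R.

Definition is_DP (nbr : DB -> DB -> Prop) (eps delta : R) (M : mechanism) : Prop :=
  forall (D D' : DB) (q : Q), nbr D D' ->
  forall S : set Y, measurable S ->
    (M D q S <= (expR eps)%:E * M D' q S + delta%:E)%E.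

Record step_choice := StepChoice {
  ch_D0 : DB; ch_D1 : DB; ch_q : Q; ch_M : mechanism }.

Definition step_law (c : step_choice) (b : bool) : probability Y R :=
  ch_M c (if b then ch_D1 c else ch_D0 c) (ch_q c).

Section Adversary.
Context {dO : measure_display} {Omega : measurableType dO}.

(* An adversary: at step i (0-based), given its internal randomness r and the
   previous outputs ys = [:: y_1; ...; y_i], it picks a step_choice. *)
Definition adversary := nat -> Omega -> seq Y -> step_choice.

(* Well-formedness w.r.t. the class of (eps,delta)-DP mechanisms and k steps:
   neighbouring databases, mechanism in the class, and (so that the view is a
   well-defined random variable) the transition kernels are measurable in the
   history (r, y_1, ..., y_i). *)
Definition valid_adversary (nbr : DB -> DB -> Prop) (eps delta : R) (k : nat)
    (A : adversary) : Prop :=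
  forall (i : nat), (i < k)%N ->
  (forall (r : Omega) (ys : i.-tuple Y),
     nbr (ch_D0 (A i r ys)) (ch_D1 (A i r ys)) /\
     is_DP nbr eps delta (ch_M (A i r ys))) /\
  (forall (b : bool) (B : set Y), measurable B ->
     measurable_fun [set: Omega * i.-tuple Y]
       (fun p : Omega * i.-tuple Y => (step_law (A i p.1 p.2) b B : \bar R))).

(* Iterated integral over the remaining m steps (finite Ionescu-Tulcea):
   given r and the outputs ys produced so far, integrate f over the
   subsequent outputs, each drawn from the kernel chosen by the adversary. *)
Fixpoint view_int (A : adversary) (b : bool) (m : nat) (r : Omega) (ys : seq Y)
    (f : Omega -> seq Y -> \bar R) {struct m} : \bar R :=
  match m with
  | 0 => f r ys
  | m'.+1 => (\int[step_law (A (size ys) r ys) b]_y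
                view_int A b m' r (rcons ys y) f)%E
  end.

(* P(V^b \in S) for a set S of views (r, y_1, ..., y_k). *)
Definition view_prob (PR : probability Omega R) (A : adversary) (b : bool)
    (k : nat) (S : set (Omega * k.-tuple Y)) : \bar R :=
  (\int[PR]_r view_int A b k r [::]
     (fun r' ys => match insub ys : option (k.-tuple Y) with
                   | Some t => (\1_S (r', t) : R)%:E
                   | None => 0
                   end))%E.

End Adversary.

Definition DP_under_composition (nbr : DB -> DB -> Prop) (eps delta : R)
    (k : nat) (eps' delta' : R) : Prop :=
  forall (dO : measure_display) (Omega : measurableType dO)
         (PR : probability Omega R) (A : @adversary _ Omega),
  valid_adversary nbr eps delta k A ->
  forall S : set (Omega * k.-tuple Y), measurable S ->
    (view_prob PR A false S <= (expR eps')%:E * view_prob PR A true S + delta'%:E)%E /\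
    (view_prob PR A true S <= (expR eps')%:E * view_prob PR A false S + delta'%:E)%E.

End DP.

Definition delta_i {R : realType} (eps : R) (k i : nat) : R :=
  (\sum_(l < i) 'C(k, l)%:R *
      (expR ((k%:R - l%:R) * eps) - expR ((k%:R - 2 * i%:R + l%:R) * eps)))
  / (1 + expR eps) ^+ k.

(* Main.v *)
Require Import Defs.
From HB Require Import structures.
From mathcomp Require Import all_boot all_order all_algebra.
From mathcomp Require Import all_classical all_reals all_analysis measurable_realfun.
From mathcomp Require Import ring lra zify.
Import Order.TTheory GRing.Theory Num.Theory.
Local Open Scope classical_set_scope.
Local Open Scope ring_scope.
Lemma max0_cases (R : realType) (a : R) :
  (Num.max a 0 = a /\ 0 <= a) \/ (Num.max a 0 = 0 /\ a <= 0).
Proof.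
have [h|h] := leP a 0.
  by right.
by left; split=> //; exact: ltW.
Qed.

Arguments max0_cases {R}.
Section Sig.
Variables (R : realType) (x dl : R).
Hypotheses (x1 : 1 <= x) (d0 : 0 <= dl) (d1 : dl <= 1).

Fixpoint sig (m : nat) (u v : R) : R :=
  match m with
  | 0%N => Num.max (u + v) 0
  | m'.+1 => dl * u + (1 - dl) / (1 + x) * (sig m' (x * u) v + sig m' u (x * v))
  end.

Let x0 : 0 <= x. Proof. move: x1; lra. Qed.
Let c0 : 0 <= (1 - dl) / (1 + x).
Proof. apply: divr_ge0; move: x1 d1; lra. Qed.
Let cx : (1 - dl) / (1 + x) * (1 + x) = 1 - dl.
Proof. have h : 0 < 1 + x by move: x1; lra. by rewrite divfK // lt0r_neq0. Qed.

Lemma sig_hom m c u v : 0 <= c -> sig m (c * u) (c * v) = c * sig m u v.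
Proof.
move=> c0'; elim: m u v => [|m IH] u v /=.
  by rewrite -mulrDr -[X in Num.max _ X](mulr0 c) maxr_pMr.
rewrite (mulrCA x c u) (mulrCA x c v) !IH; ring.
Qed.

Lemma sig_monov m u v v' : v' <= v -> sig m u v' <= sig m u v.
Proof.
elim: m u v v' => [|m IH] u v v' h /=.
  by apply: le_max2 => //; rewrite lerD2l.
rewrite lerD2l ler_wpM2l // lerD //; first exact: IH.
by apply: IH; rewrite ler_wpM2l.
Qed.

Lemma sig_lip m u u' v : u <= u' -> sig m u' v - sig m u v <= u' - u.
Proof.
elim: m u u' v => [|m IH] u u' v h /=.
  case: (max0_cases (u' + v)) => [[-> ?]|[-> ?]]; case: (max0_cases (u + v)) => [[-> ?]|[-> ?]]; lra.
have h1 := IH (x * u) (x * u') v (ler_wpM2l x0 h).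
have h2 := IH u u' (x * v) h.
have c0' := c0; have cx' := cx.
set c := (1 - dl) / (1 + x) in c0' cx' *.
have : c * ((sig m (x * u') v - sig m (x * u) v) + (sig m u' (x * v) - sig m u (x * v)))
   <= c * ((x * u' - x * u) + (u' - u)).
  by apply: ler_wpM2l => //; exact: lerD.
move=> H.
have E : c * (x * u' - x * u + (u' - u)) = (1 - dl) * (u' - u).
  by rewrite -cx'; ring.
rewrite E in H.
have -> : dl * u' + c * (sig m (x * u') v + sig m u' (x * v)) -
    (dl * u + c * (sig m (x * u) v + sig m u (x * v)))
  = dl * (u' - u) + c * ((sig m (x * u') v - sig m (x * u) v) + (sig m u' (x * v) - sig m u (x * v))) by ring.
lra.
Qed.

Lemma sig_ge0 m u v : 0 <= u -> 0 <= sig m u v.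
Proof.
elim: m u v => [|m IH] u v u0 /=; first by rewrite le_max lexx orbT.
apply: addr_ge0; first exact: mulr_ge0.
apply: mulr_ge0 => //; apply: addr_ge0; apply: IH => //; exact: mulr_ge0.
Qed.

Lemma sig_0v m v : v <= 0 -> sig m 0 v = 0.
Proof.
elim: m v => [|m IH] v v0 /=.
  by rewrite add0r; apply/max_idPr.
have h2 : x * v <= 0 by apply: mulr_ge0_le0.
by rewrite !mulr0 (IH _ v0) (IH _ h2) addr0 mulr0 add0r.
Qed.

Lemma sig_le m u v : 0 <= u -> v <= 0 -> sig m u v <= u.
Proof.
move=> u0 v0; have := @sig_lip m 0 u v u0; rewrite sig_0v //; lra.
Qed.

Lemma lamu m u v : 0 <= u -> v <= 0 -> exists la mu,
  [/\ x * la + mu = sig m (x * u) v, la + x * mu = sig m u (x * v),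
      la <= u, mu <= 0 & 0 <= la].
Proof.
move=> u0 v0.
have [->|xgt1] := eqVneq x 1.
  exists (sig m u v), 0; split; rewrite ?mul1r ?mulr0 ?addr0 //.
    exact: sig_le.
  exact: sig_ge0.
have xg : 1 < x by rewrite lt_neqAle eq_sym xgt1 x1.
have xx : 0 < x * x - 1 by nra.
set C1 := sig m (x * u) v; set C2 := sig m u (x * v).
have C1g : 0 <= C1 by apply: sig_ge0; exact: mulr_ge0.
have C2g : 0 <= C2 by apply: sig_ge0.
have hm : x * C2 <= C1.
  rewrite /C2 -sig_hom //; apply: sig_monov; rewrite mulrA; nra.
have hl : x * C1 - C2 <= (x * x - 1) * u.
  rewrite /C1 -sig_hom // mulrA.
  have := @sig_lip m u (x * x * u) (x * v); rewrite /C2.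
  have : u <= x * x * u by nra.
  move=> h /(_ h); lra.
exists ((x * C1 - C2) / (x * x - 1)), ((x * C2 - C1) / (x * x - 1)).
have nz : x * x - 1 != 0 by rewrite gt_eqF.
split.
- by field.
- by field.
- by rewrite ler_pdivrMr //; lra.
- by rewrite ler_pdivrMr // mul0r; lra.
- by rewrite divr_ge0 //; [nra | exact: ltW].
Qed.

Definition rho m u v := \sum_(0 <= j < m.+1)
  'C(m, j)%:R * Num.max (u * x ^+ (m - j) + v * x ^+ j) 0.

Lemma rhoS m u v : rho m.+1 u v = rho m (x * u) v + rho m u (x * v).
Proof.
pose T j := Num.max (u * x ^+ (m.+1 - j) + v * x ^+ j) 0.
have eA : rho m (x * u) v = \sum_(0 <= j < m.+1) 'C(m, j)%:R * T j.
  apply: eq_big_nat => j /andP[_ hj]; rewrite /T; congr (_ * Num.max (_ + _) 0).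
  by rewrite subSn // exprS; ring.
have eB : rho m u (x * v) = \sum_(0 <= j < m.+1) 'C(m, j)%:R * T j.+1.
  apply: eq_big_nat => j /andP[_ hj]; rewrite /T; congr (_ * Num.max (_ + _) 0).
  by rewrite ?subSS exprS; ring.
have eL : rho m.+1 u v = T 0%N + \sum_(0 <= j < m.+1) 'C(m, j.+1)%:R * T j.+1
    + \sum_(0 <= j < m.+1) 'C(m, j)%:R * T j.+1.
  rewrite /rho big_nat_recl // -addrA -big_split /= bin0 mul1r; congr (_ + _).
  by apply: eq_big_nat => j _; rewrite binS natrD mulrDl.
have e1 : \sum_(0 <= j < m.+1) 'C(m, j)%:R * T j
    = T 0%N + \sum_(0 <= j < m) 'C(m, j.+1)%:R * T j.+1.
  by rewrite big_nat_recl //= bin0 mul1r.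
have e2 : \sum_(0 <= j < m.+1) 'C(m, j.+1)%:R * T j.+1
    = \sum_(0 <= j < m) 'C(m, j.+1)%:R * T j.+1.
  by rewrite big_nat_recr //= bin_small // mul0r addr0.
by rewrite eL eA eB e1 e2.
Qed.

Lemma sig_closed m u v : sig m u v * (1 + x) ^+ m =
  (1 - (1 - dl) ^+ m) * u * (1 + x) ^+ m + (1 - dl) ^+ m * rho m u v.
Proof.
elim: m u v => [|m IH] u v.
  by rewrite /rho big_nat1 /= !expr0 !mulr1 subrr bin0 mul0r add0r !mul1r.
rewrite rhoS /=.
set c := (1 - dl) / (1 + x).
set S1 := sig m (x * u) v; set S2 := sig m u (x * v).
have E : (dl * u + c * (S1 + S2)) * (1 + x) ^+ m.+1 =
   dl * u * ((1 + x) * (1 + x) ^+ m) + (c * (1 + x)) * (S1 * (1 + x) ^+ m + S2 * (1 + x) ^+ m).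
  by rewrite exprS; ring.
rewrite E cx /S1 /S2 !IH !exprS; ring.
Qed.

Lemma rho_final k i : (2 * i <= k)%N ->
  rho k 1 (- x ^+ (k - 2 * i)) =
  \sum_(0 <= l < i) 'C(k, l)%:R * (x ^+ (k - l) - x ^+ (k - 2 * i + l)).
Proof.
move=> hik; rewrite /rho (@big_cat_nat _ _ _ i) //=; last by lia.
rewrite [X in _ + X = _]big1_seq ?addr0; last first.
  move=> j /andP[_]; rewrite mem_index_iota => /andP[h1 h2].
  rewrite max_r ?mulr0 // mul1r mulNr -exprD subr_le0.
  apply: ler_weXn2l => //; lia.
apply: eq_big_nat => j /andP[_ hj].
rewrite max_l ?mul1r mulNr -exprD //.
rewrite subr_ge0; apply: ler_weXn2l => //; lia.
Qed.

End Sig.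
Arguments sig {R}.
Arguments rho {R}.
Lemma pointwise (R : realType) (x u v C1 C2 la mu p q g0 g1 : R) :
  1 <= x -> 0 <= u -> v <= 0 -> 0 <= p -> 0 <= q ->
  0 <= g0 <= 1 -> 0 <= g1 <= 1 ->
  x * u * g0 + v * g1 <= C1 -> u * g0 + x * v * g1 <= C2 ->
  x * la + mu = C1 -> la + x * mu = C2 -> la <= u -> mu <= 0 ->
  u * g0 * p + v * g1 * q <=
  (u - la) * Num.max (p - x * q) 0 + (- mu) * Num.max (q - x * p) 0 + la * p + mu * q.
Proof.
move=> x1 u0 v0 p0 q0 /andP[g00 g01] /andP[g10 g11] hC1 hC2 e1 e2 hla hmu.
have [hpq|hpq] := leP (x * q) p.
  have e : Num.max (q - x * p) 0 = 0.
    apply/max_idPr; rewrite subr_le0; nra.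
  rewrite max_l ?subr_ge0 // e.
  have H1 : 0 <= (u - u * g0) * (p - x * q) by apply: mulr_ge0; nra.
  have H2 : 0 <= q * (C1 - (x * u * g0 + v * g1)) by apply: mulr_ge0; lra.
  rewrite -e1 in H2; nra.
have [hqp|hqp] := leP (x * p) q.
  rewrite max_r; last by rewrite subr_le0; exact: ltW.
  rewrite max_l ?subr_ge0 //.
  have H1 : 0 <= (- v * g1) * (q - x * p) by apply: mulr_ge0; nra.
  have H2 : 0 <= p * (C2 - (u * g0 + x * v * g1)) by apply: mulr_ge0; lra.
  rewrite -e2 in H2; nra.
rewrite max_r; last by rewrite subr_le0; exact: ltW.
rewrite max_r; last by rewrite subr_le0; exact: ltW.
have xx : 0 < x * x - 1 by nra.
have H1 : 0 <= (x * p - q) * (C1 - (x * u * g0 + v * g1)) by apply: mulr_ge0; lra.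
have H2 : 0 <= (x * q - p) * (C2 - (u * g0 + x * v * g1)) by apply: mulr_ge0; lra.
rewrite -e1 in H1; rewrite -e2 in H2.
have E : (x * x - 1) * (u * g0 * p + v * g1 * q) <= (x * x - 1) * (la * p + mu * q) by nra.
rewrite !mulr0 !add0r.
by rewrite ler_pM2l in E.
Qed.
Ltac mfun := repeat first [assumption | exact: measurable_cst | apply: measurable_funD | apply: measurable_funM].
Ltac nn := repeat first [assumption | match goal with H : forall y, 0 <= _ y |- _ => apply: H end | apply: addr_ge0 | apply: mulr_ge0].

Section IntHelpers.
Context d (T : measurableType d) (R : realType) (m : {measure set T -> \bar R}).

Lemma int_lin2 (a b : R) (f g : T -> R) :
  0 <= a -> 0 <= b -> (forall y, 0 <= f y) -> (forall y, 0 <= g y) ->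
  measurable_fun setT f -> measurable_fun setT g ->
  (\int[m]_y ((a * f y + b * g y)%:E) =
   a%:E * \int[m]_y (f y)%:E + b%:E * \int[m]_y (g y)%:E)%E.
Proof.
move=> a0 b0 f0 g0 mf mg.
under eq_integral do rewrite EFinD !EFinM.
rewrite ge0_integralD //=.
- rewrite ge0_integralZl_EFin //; last exact/measurable_EFinP.
  rewrite ge0_integralZl_EFin //; last exact/measurable_EFinP.
  by move=> y _; rewrite lee_fin.
  by move=> y _; rewrite lee_fin.
- by move=> y _; rewrite -EFinM lee_fin mulr_ge0.
- by apply/measurable_EFinP; apply: measurable_funM => //; exact: measurable_cst.
- by move=> y _; rewrite -EFinM lee_fin mulr_ge0.
- by apply/measurable_EFinP; apply: measurable_funM => //; exact: measurable_cst.
Qed.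

Lemma int_excess (a b : T -> R) (x dl : R) : 0 <= x ->
  (forall y, 0 <= a y) -> (forall y, 0 <= b y) ->
  measurable_fun setT a -> measurable_fun setT b ->
  (forall S, measurable S -> (\int[m]_(y in S) (b y)%:E)%E \is a fin_num) ->
  (forall S, measurable S -> (\int[m]_(y in S) (a y)%:E <=
       x%:E * \int[m]_(y in S) (b y)%:E + dl%:E)%E) ->
  (\int[m]_y (Num.max (a y - x * b y) 0)%:E <= dl%:E)%E.
Proof.
move=> x0 a0 b0 ma mb bfin hab.
set h := fun y => a y - x * b y.
have mh : measurable_fun setT h.
  apply: measurable_funB => //; apply: measurable_funM => //; exact: measurable_cst.
set B := [set y | 0 < h y].
have mB : measurable B.
  have := mh measurableT _ (measurable_itv `]0, +oo[); rewrite setTI.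
  congr measurable; apply/seteqP; split => y /=; rewrite in_itv /= andbT //.
have me : measurable_fun setT (fun y => (Num.max (h y) 0)%:E).
  apply/measurable_EFinP; apply: measurable_maxr => //; exact: measurable_cst.
rewrite -(setUv B) ge0_integral_setU //; last 3 first.
- by rewrite setUv.
- by move=> y _; rewrite lee_fin le_max lexx orbT.
- by rewrite disj_set2E setICr.
rewrite [X in (_ + X)%E]integral0_eq ?adde0; last first.
  move=> y /= hy; congr EFin; apply/max_idPr; rewrite leNgt; exact/negP.
have e1 : (\int[m]_(y in B) (Num.max (h y) 0)%:E + x%:E * \int[m]_(y in B) (b y)%:E
   = \int[m]_(y in B) (a y)%:E)%E.
  rewrite -ge0_integralZl_EFin //; last 2 first.
  - by move=> y _; rewrite lee_fin.
  - exact/measurable_EFinP/measurable_funTS.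
  rewrite -ge0_integralD //; last 4 first.
  - by move=> y _; rewrite lee_fin le_max lexx orbT.
  - exact: measurable_funTS.
  - by move=> y _; rewrite lee_fin mulr_ge0.
  - apply/measurable_EFinP/measurable_funTS.
    exact: (measurable_funM (measurable_cst x) mb).
  apply: eq_integral => y /[!inE] /= hy; rewrite max_l; last exact: ltW.
  by rewrite /h -EFinD subrK.
have := hab B mB; rewrite -e1 addeC.
rewrite leeD2lE //; last by rewrite fin_numM // bfin.
exact: measurableC.
Qed.

End IntHelpers.

Section OneStep.
Context (R : realType) (dY : measure_display) (Y : measurableType dY).
Variables (P Q : probability Y R).

Definition mPQ := measure_add P Q.
HB.instance Definition _ := Measure.on mPQ.
Let mPQ_fin : fin_num_fun mPQ.
Proof. move=> U mU; rewrite /mPQ. have := measure_addE P Q U. move=> ->. by rewrite fin_numD !fin_num_measure. Qed.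
HB.instance Definition _ := Measure_isFinite.Build _ _ _ mPQ mPQ_fin.

Let domP : P `<< mPQ.
Proof.
apply/null_content_dominatesP => A mA; change (mPQ A = 0 -> P A = 0)%E.
rewrite /mPQ measure_addE => /eqP.
by rewrite padde_eq0 // => /andP[/eqP].
Qed.
Let domQ : Q `<< mPQ.
Proof.
apply/null_content_dominatesP => A mA; change (mPQ A = 0 -> Q A = 0)%E.
rewrite /mPQ measure_addE => /eqP.
by rewrite padde_eq0 // => /andP[_ /eqP].
Qed.

Let p := Radon_Nikodym_SigmaFinite.f P mPQ.
Let q := Radon_Nikodym_SigmaFinite.f Q mPQ.
Let pr y := fine (p y).
Let qr y := fine (q y).
Let hp y : p y = (pr y)%:E.
Proof. by rewrite /pr fineK // Radon_Nikodym_SigmaFinite.f_fin_num. Qed.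
Let hq y : q y = (qr y)%:E.
Proof. by rewrite /qr fineK // Radon_Nikodym_SigmaFinite.f_fin_num. Qed.
Let pr0 y : 0 <= pr y.
Proof. by rewrite -lee_fin -hp Radon_Nikodym_SigmaFinite.f_ge0. Qed.
Let qr0 y : 0 <= qr y.
Proof. by rewrite -lee_fin -hq Radon_Nikodym_SigmaFinite.f_ge0. Qed.
Let mp : measurable_fun setT p.
Proof. exact: measurable_int (Radon_Nikodym_SigmaFinite.f_integrable domP). Qed.
Let mq : measurable_fun setT q.
Proof. exact: measurable_int (Radon_Nikodym_SigmaFinite.f_integrable domQ). Qed.
Let mpr : measurable_fun setT pr.
Proof. apply/measurable_EFinP; rewrite (_ : _ \o _ = p) //; apply/funext => y /=; by rewrite hp. Qed.
Let mqr : measurable_fun setT qr.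
Proof. apply/measurable_EFinP; rewrite (_ : _ \o _ = q) //; apply/funext => y /=; by rewrite hq. Qed.

Let intP S : measurable S -> P S = (\int[mPQ]_(y in S) (pr y)%:E)%E.
Proof.
move=> mS; rewrite (Radon_Nikodym_SigmaFinite.f_integral domP) //.
by apply: eq_integral => y _; rewrite /pr fineK //; exact: Radon_Nikodym_SigmaFinite.f_fin_num.
Qed.
Let intQ S : measurable S -> Q S = (\int[mPQ]_(y in S) (qr y)%:E)%E.
Proof.
move=> mS; rewrite (Radon_Nikodym_SigmaFinite.f_integral domQ) //.
by apply: eq_integral => y _; rewrite /qr fineK //; exact: Radon_Nikodym_SigmaFinite.f_fin_num.
Qed.

Let cvP (g : Y -> R) : measurable_fun setT g -> (forall y, 0 <= g y) ->
  (\int[P]_y (g y)%:E = \int[mPQ]_y ((g y * pr y)%:E))%E.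
Proof.
move=> mg g0; rewrite -(Radon_Nikodym_SigmaFinite.change_of_variables domP) //.
- apply: eq_integral => y _; rewrite EFinM /pr fineK //; exact: Radon_Nikodym_SigmaFinite.f_fin_num.
all: try (by move=> y /=; rewrite lee_fin).
all: exact/measurable_EFinP.
Qed.
Let cvQ (g : Y -> R) : measurable_fun setT g -> (forall y, 0 <= g y) ->
  (\int[Q]_y (g y)%:E = \int[mPQ]_y ((g y * qr y)%:E))%E.
Proof.
move=> mg g0; rewrite -(Radon_Nikodym_SigmaFinite.change_of_variables domQ) //.
- apply: eq_integral => y _; rewrite EFinM /qr fineK //; exact: Radon_Nikodym_SigmaFinite.f_fin_num.
all: try (by move=> y /=; rewrite lee_fin).
all: exact/measurable_EFinP.
Qed.

Lemma onestep_core (x dl u v la mu : R) (g0 g1 : Y -> R) :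
  1 <= x -> 0 <= u -> v <= 0 -> la <= u -> mu <= 0 -> 0 <= la ->
  (forall S, measurable S -> (P S <= x%:E * Q S + dl%:E)%E) ->
  (forall S, measurable S -> (Q S <= x%:E * P S + dl%:E)%E) ->
  measurable_fun setT g0 -> measurable_fun setT g1 ->
  (forall y, 0 <= g0 y <= 1) -> (forall y, 0 <= g1 y <= 1) ->
  (forall y, x * u * g0 y + v * g1 y <= x * la + mu) ->
  (forall y, u * g0 y + x * v * g1 y <= la + x * mu) ->
  (u%:E * \int[P]_y (g0 y)%:E + (- mu)%:E <=
    (dl * (u - la) + dl * (- mu) + la)%:E + (- v)%:E * \int[Q]_y (g1 y)%:E)%E.
Proof.
move=> x1 u0 v0 hla hmu la0 hPQ hQP mg0 mg1 g0b g1b hC1 hC2.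
have x0 : 0 <= x by lra.
have hul : 0 <= u - la by lra.
have hmu' : 0 <= - mu by lra.
have hv' : 0 <= - v by lra.
have g00 y : 0 <= g0 y by case/andP: (g0b y).
have g10 y : 0 <= g1 y by case/andP: (g1b y).
set e := fun y => Num.max (pr y - x * qr y) 0.
set f := fun y => Num.max (qr y - x * pr y) 0.
have e0 y : 0 <= e y by rewrite /e le_max lexx orbT.
have f0 y : 0 <= f y by rewrite /f le_max lexx orbT.
have me : measurable_fun setT e.
  apply: measurable_maxr; last exact: measurable_cst.
  apply: measurable_funB => //; exact: measurable_funM (measurable_cst x) mqr.
have mf : measurable_fun setT f.
  apply: measurable_maxr; last exact: measurable_cst.
  apply: measurable_funB => //; exact: measurable_funM (measurable_cst x) mpr.
have mg0p : measurable_fun setT (fun y => g0 y * pr y) by exact: measurable_funM.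
have mg1q : measurable_fun setT (fun y => g1 y * qr y) by exact: measurable_funM.
have Ie : (\int[mPQ]_y (e y)%:E <= dl%:E)%E.
  apply: int_excess => //.
  - by move=> S mS; rewrite -intQ // fin_num_measure.
  - by move=> S mS; rewrite -intP // -intQ //; exact: hPQ.
have If : (\int[mPQ]_y (f y)%:E <= dl%:E)%E.
  apply: int_excess => //.
  - by move=> S mS; rewrite -intP // fin_num_measure.
  - by move=> S mS; rewrite -intP // -intQ //; exact: hQP.
have Ip : (\int[mPQ]_y (pr y)%:E = 1)%E by rewrite -intP // probability_setT.
have Iq : (\int[mPQ]_y (qr y)%:E = 1)%E by rewrite -intQ // probability_setT.
have pw y : u * (g0 y * pr y) + (- mu) * qr y <=
    ((u - la) * e y + (- mu) * f y) + (la * pr y + (- v) * (g1 y * qr y)).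
  have := @pointwise R x u v (x * la + mu) (la + x * mu) la mu (pr y) (qr y) (g0 y) (g1 y)
    x1 u0 v0 (pr0 y) (qr0 y) (g0b y) (g1b y) (hC1 y) (hC2 y) erefl erefl hla hmu.
  rewrite /e /f; lra.
have EL : (\int[mPQ]_y ((u * (g0 y * pr y) + (- mu) * qr y)%:E) =
    u%:E * \int[P]_y (g0 y)%:E + (- mu)%:E)%E.
  rewrite int_lin2 //; last by move=> y; nn.
  by rewrite -cvP // Iq mule1.
have ER : (\int[mPQ]_y ((((u - la) * e y + (- mu) * f y) + (la * pr y + (- v) * (g1 y * qr y)))%:E) =
    ((u - la)%:E * \int[mPQ]_y (e y)%:E + (- mu)%:E * \int[mPQ]_y (f y)%:E) +
    (la%:E + (- v)%:E * \int[Q]_y (g1 y)%:E))%E.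
  under eq_integral do rewrite EFinD.
  rewrite ge0_integralD; last 5 first.
  - by [].
  all: try (by move=> y _; rewrite lee_fin; nn).
  all: try (by apply/measurable_EFinP; mfun).
  congr (_ + _)%E.
    apply: (@int_lin2 _ _ _ _ (u - la) (- mu) e f) => //.
  transitivity (la%:E * \int[mPQ]_y (pr y)%:E + (- v)%:E * \int[mPQ]_y ((g1 y * qr y)%:E))%E.
    apply: (@int_lin2 _ _ _ _ la (- v) pr (fun y => g1 y * qr y)) => //.
    by move=> y; nn.
  by rewrite Ip mule1 -cvQ.
have LE := @ge0_le_integral _ _ _ mPQ setT measurableT
  (fun y => (u * (g0 y * pr y) + (- mu) * qr y)%:E)
  (fun y => (((u - la) * e y + (- mu) * f y) + (la * pr y + (- v) * (g1 y * qr y)))%:E).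
rewrite EL ER in LE.
apply: le_trans; first apply: LE.
- by move=> y _; rewrite lee_fin; nn.
- by apply/measurable_EFinP; mfun.
- by apply/measurable_EFinP; mfun.
- by move=> y _; rewrite lee_fin; exact: pw.
rewrite addeA; apply: leeD2r.
rewrite !EFinD; apply: leeD2r; apply: leeD.
- by rewrite mulrC EFinM; apply: lee_wpmul2l; rewrite ?lee_fin.
- by rewrite mulrC EFinM; apply: lee_wpmul2l; rewrite ?lee_fin.
Qed.


End OneStep.

Definition inR (R : realType) (x dl : R) (m : nat) (a b : R) :=
  [/\ 0 <= a <= 1, 0 <= b <= 1 &
   forall u v, 0 <= u -> v <= 0 ->
     u * a + v * b <= sig x dl m u v /\ u * b + v * a <= sig x dl m u v].
Arguments inR {R}.

Lemma int01 (R : realType) d (T : measurableType d) (P : probability T R) (g : T -> R) :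
  measurable_fun setT g -> (forall y, 0 <= g y <= 1) ->
  (\int[P]_y (g y)%:E)%E = (fine (\int[P]_y (g y)%:E))%:E /\
  0 <= fine (\int[P]_y (g y)%:E) <= 1.
Proof.
move=> mg gb.
have h0 : (0 <= \int[P]_y (g y)%:E)%E.
  by apply: integral_ge0 => y _; rewrite lee_fin; case/andP: (gb y).
have h1 : (\int[P]_y (g y)%:E <= 1)%E.
  apply: (@le_trans _ _ (\int[P]_y (cst 1%E) y)%E).
    apply: ge0_le_integral => //.
    - by move=> y _; rewrite lee_fin; case/andP: (gb y).
    - exact/measurable_EFinP.
    - by move=> y _; rewrite /= lee_fin; case/andP: (gb y).
  rewrite integral_cst // mul1e le_eqVlt; apply/orP; left; apply/eqP.
  exact: probability_setT.
have fin : (\int[P]_y (g y)%:E)%E \is a fin_num by rewrite ge0_fin_numE // (le_lt_trans h1) // ltey.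
split; first by rewrite fineK.
apply/andP; split; first exact: fine_ge0.
by rewrite -lee_fin fineK.
Qed.

Arguments int01 {R d T}.

Lemma onestep (R : realType) (dY : measure_display) (Y : measurableType dY)
  (P Q : probability Y R) (x dl : R) (m : nat) (g0 g1 : Y -> R) :
  1 <= x -> 0 <= dl -> dl <= 1 ->
  (forall S, measurable S -> (P S <= x%:E * Q S + dl%:E)%E) ->
  (forall S, measurable S -> (Q S <= x%:E * P S + dl%:E)%E) ->
  measurable_fun setT g0 -> measurable_fun setT g1 ->
  (forall y, inR x dl m (g0 y) (g1 y)) ->
  inR x dl m.+1 (fine (\int[P]_y (g0 y)%:E)) (fine (\int[Q]_y (g1 y)%:E)).
Proof.
move=> x1 d0 d1 hPQ hQP mg0 mg1 hR.
have g0b y : 0 <= g0 y <= 1 by case: (hR y).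
have g1b y : 0 <= g1 y <= 1 by case: (hR y).
have [E0 b0] := int01 P g0 mg0 g0b.
have [E1 b1] := int01 Q g1 mg1 g1b.
set a0 := fine _ in E0 b0 *; set a1 := fine _ in E1 b1 *.
split => // u v u0 v0.
have [la [mu [e1 e2 hla hmu la0]]] := @lamu R x dl x1 d0 d1 m u v u0 v0.
have x0 : 0 <= x by lra.
have xu0 : 0 <= x * u by exact: mulr_ge0.
have xv0 : x * v <= 0 by exact: mulr_ge0_le0.
have hs : sig x dl m.+1 u v = dl * u + (1 - dl) * (la + mu).
  rewrite /= -e1 -e2.
  have : 1 + x != 0 by rewrite gt_eqF //; lra.
  move=> nz; field.
  exact: nz.
have H1 y : x * u * g0 y + v * g1 y <= x * la + mu.
  by case: (hR y) => _ _ /(_ _ _ xu0 v0) [h _]; rewrite e1.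
have H2 y : u * g0 y + x * v * g1 y <= la + x * mu.
  by case: (hR y) => _ _ /(_ _ _ u0 xv0) [h _]; rewrite e2.
have H1' y : x * u * g1 y + v * g0 y <= x * la + mu.
  by case: (hR y) => _ _ /(_ _ _ xu0 v0) [_ h]; rewrite e1.
have H2' y : u * g1 y + x * v * g0 y <= la + x * mu.
  by case: (hR y) => _ _ /(_ _ _ u0 xv0) [_ h]; rewrite e2.
have core := @onestep_core R dY Y P Q x dl u v la mu g0 g1 x1 u0 v0 hla hmu la0
    hPQ hQP mg0 mg1 g0b g1b H1 H2.
have core' := @onestep_core R dY Y Q P x dl u v la mu g1 g0 x1 u0 v0 hla hmu la0
    hQP hPQ mg1 mg0 g1b g0b H1' H2'.
rewrite E0 E1 -!EFinM -!EFinD lee_fin in core.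
rewrite E0 E1 -!EFinM -!EFinD lee_fin in core'.
rewrite hs; split; lra.
Qed.

Section KerInt.
Context (R : realType) (dX dY : measure_display) (X : measurableType dX) (Y : measurableType dY).
Variable l : X -> probability Y R.
Hypothesis ml : forall U, measurable U -> measurable_fun setT (fun x => l x U).

Definition lk : X -> {measure set Y -> \bar R} := fun x => l x.
Let mlk : forall U, measurable U -> measurable_fun setT (lk ^~ U) := ml.
HB.instance Definition _ := isKernel.Build _ _ X Y R lk mlk.
Let lk_uub : measure_fam_uub lk.
Proof.
exists 2 => x; rewrite /lk.
have -> : (l x : {measure set Y -> \bar R}) setT = 1%E by exact: probability_setT.
by rewrite lte_fin ltr1n.
Qed.
HB.instance Definition _ := Kernel_isFinite.Build _ _ X Y R lk lk_uub.

Lemma ker_int_meas (k : X * Y -> \bar R) : (forall z, (0 <= k z)%E) ->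
  measurable_fun setT k -> measurable_fun setT (fun x => (\int[l x]_y k (x, y))%E).
Proof. move=> k0 mk; exact: (measurable_fun_integral_finite_kernel k lk). Qed.
End KerInt.

Lemma meas_rcons (dO dY : measure_display) (Omega : measurableType dO) (Y : measurableType dY) n :
  measurable_fun setT (fun z : (Omega * n.-tuple Y) * Y => (z.1.1, [tuple of rcons z.1.2 z.2])).
Proof.
apply: measurable_fun_pair.
  exact: (measurableT_comp measurable_fst measurable_fst).
apply/measurable_fun_tnthP => i.
have [hi|hi] := ltnP i n.
  rewrite (_ : _ \o _ = fun z : (Omega * n.-tuple Y) * Y => tnth z.1.2 (Ordinal hi)).
    apply: (measurableT_comp (measurable_tnth (Ordinal hi))).
    exact: (measurableT_comp measurable_snd measurable_fst).
  apply: boolp.funext => z /=; rewrite (tnth_nth z.2) /= nth_rcons size_tuple hi.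
  by rewrite (tnth_nth z.2).
have ein : nat_of_ord i = n by apply/eqP; rewrite eqn_leq hi -ltnS ltn_ord.
rewrite (_ : _ \o _ = fun z : (Omega * n.-tuple Y) * Y => z.2); first exact: measurable_snd.
apply: boolp.funext => z /=; rewrite (tnth_nth z.2) /= nth_rcons size_tuple ein ltnn eqxx //.
Qed.

Section View.
Context (R : realType) (DB Q : Type) (dY : measure_display) (Y : measurableType dY)
  (dO : measure_display) (Omega : measurableType dO).
Variables (nbr : DB -> DB -> Prop) (eps delta : R) (k : nat).
Variable (A : @adversary R DB Q dY Y dO Omega).
Hypothesis hA : valid_adversary nbr eps delta k A.
Variable (f : Omega -> seq Y -> \bar R).
Hypothesis f0 : forall r ys, (0 <= f r ys)%E.
Hypothesis mf : measurable_fun setT (fun p : Omega * k.-tuple Y => f p.1 p.2).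

Lemma view_ge0 b m r ys : (0 <= view_int A b m r ys f)%E.
Proof.
elim: m r ys => [|m IH] r ys /=; first exact: f0.
by apply: integral_ge0 => y _; exact: IH.
Qed.

Lemma view_meas b m : forall n, (n + m = k)%N ->
  measurable_fun setT (fun p : Omega * n.-tuple Y => view_int A b m p.1 p.2 f).
Proof.
elim: m => [|m IH] n.
  by rewrite addn0 => nk; subst k.
move=> nk.
have nk' : (n.+1 + m = k)%N by rewrite addSnnS.
have ltnk : (n < k)%N by rewrite -nk -addSnnS leq_addr.
have mG := IH _ nk'.
rewrite (_ : (fun p : Omega * n.-tuple Y => view_int A b m.+1 p.1 p.2 f) =
  (fun p : Omega * n.-tuple Y => \int[step_law (A n p.1 p.2) b]_y
     (fun z : (Omega * n.-tuple Y) * Y => view_int A b m z.1.1 [tuple of rcons z.1.2 z.2] f) (p, y))%E); last first.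
  by apply: boolp.funext => p /=; rewrite size_tuple.
have ml : forall U, measurable U ->
    measurable_fun setT (fun p : Omega * n.-tuple Y => step_law (A n p.1 p.2) b U).
  by move=> U mU; exact: ((hA n ltnk).2 b U mU).
have mk : measurable_fun setT
    (fun z : (Omega * n.-tuple Y) * Y => view_int A b m z.1.1 [tuple of rcons z.1.2 z.2] f).
  exact: (measurableT_comp mG (meas_rcons _ _ Omega Y n)).
exact: (@ker_int_meas R _ _ _ _ (fun p : Omega * n.-tuple Y => step_law (A n p.1 p.2) b) ml _
   (fun z => view_ge0 _ _ _ _) mk).
Qed.

End View.

Section Region.
Context (R : realType) (DB Q : Type) (dY : measure_display) (Y : measurableType dY)
  (dO : measure_display) (Omega : measurableType dO).
Variables (nbr : DB -> DB -> Prop) (eps delta : R) (k : nat).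
Hypothesis nbr_sym : forall D D' : DB, nbr D D' -> nbr D' D.
Hypotheses (heps : 0 <= eps) (hd0 : 0 <= delta) (hd1 : delta <= 1).
Variable (A : @adversary R DB Q dY Y dO Omega).
Hypothesis hA : valid_adversary nbr eps delta k A.
Variable (f : Omega -> seq Y -> \bar R) (g : Omega -> seq Y -> R).
Hypothesis hf : forall r ys, f r ys = (g r ys)%:E.
Hypothesis g01 : forall r ys, 0 <= g r ys <= 1.
Hypothesis mf : measurable_fun setT (fun p : Omega * k.-tuple Y => f p.1 p.2).

Let f0 r ys : (0 <= f r ys)%E.
Proof. by rewrite hf lee_fin; case/andP: (g01 r ys). Qed.

Let x1 : 1 <= expR eps.
Proof. have := expR_ge1Dx eps; move: heps; lra. Qed.

Lemma view_region m : forall n (t : n.-tuple Y) r, (n + m = k)%N ->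
  (forall b, view_int A b m r t f = (fine (view_int A b m r t f))%:E) /\
  inR (expR eps) delta m (fine (view_int A false m r t f)) (fine (view_int A true m r t f)).
Proof.
elim: m => [|m IH] n t r nk.
  rewrite /= hf /=; split => //; split; rewrite ?g01 // => u v u0 v0.
  have := g01 r t; set a := g r t => /andP[a0 a1].
  rewrite /sig. case: (max0_cases (u + v)) => [[-> h]|[-> h]]; split; nra.
have nk' : (n.+1 + m = k)%N by rewrite addSnnS.
have ltnk : (n < k)%N by rewrite -nk -addSnnS leq_addr.
set c := A n r t.
pose G b y := fine (view_int A b m r [tuple of rcons t y] f).
have IHy y := IH n.+1 [tuple of rcons t y] r nk'.
have eqI b : view_int A b m.+1 r t f = (\int[step_law c b]_y (G b y)%:E)%E.
  rewrite /= size_tuple; apply: eq_integral => y _.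
  by rewrite /G -((IHy y).1 b).
have mG b : measurable_fun setT (G b).
  have mV := @view_meas R DB Q dY Y dO Omega nbr eps delta k A hA f f0 mf b m n.+1 nk'.
  have hp : measurable_fun setT (fun y : Y => ((r, t), y)).
    by apply: measurable_fun_pair => //; exact: measurable_cst.
  have hrc := measurableT_comp (meas_rcons _ _ Omega Y n) hp.
  have h2 := measurableT_comp mV hrc.
  exact: (measurableT_comp (fine_measurable measurableT) h2).
have [hn hDP] := (hA n ltnk).1 r t.
have hPQ : forall S, measurable S ->
    (step_law c false S <= (expR eps)%:E * step_law c true S + delta%:E)%E.
  by move=> S mS; exact: (hDP _ _ _ hn S mS).
have hQP : forall S, measurable S ->
    (step_law c true S <= (expR eps)%:E * step_law c false S + delta%:E)%E.
  by move=> S mS; exact: (hDP _ _ _ (nbr_sym _ _ hn) S mS).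
have hR y : inR (expR eps) delta m (G false y) (G true y) by exact: (IHy y).2.
have := @onestep R dY Y (step_law c false) (step_law c true) (expR eps) delta m (G false) (G true) x1 hd0 hd1 hPQ hQP (mG false) (mG true) hR.
have Gb b y : 0 <= G b y <= 1 by case: (hR y) => ? ?; case: b.
have [E0 _] := int01 (step_law c false) (G false) (mG false) (Gb false).
have [E1 _] := int01 (step_law c true) (G true) (mG true) (Gb true).
rewrite !eqI => H; split => //.
by case; rewrite eqI.
Qed.

End Region.

Lemma sig_delta (R : realType) (eps delta : R) (k i : nat) :
  0 <= eps -> 0 <= delta -> delta <= 1 -> (i <= k./2)%N ->
  sig (expR eps) delta k 1 (- expR ((k%:R - 2 * i%:R) * eps)) =
  1 - (1 - delta) ^+ k * (1 - delta_i eps k i).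
Proof.
move=> heps hd0 hd1 hi.
have h2i : (2 * i <= k)%N.
  by apply: (leq_trans (leq_mul (leqnn 2) hi)); rewrite mul2n -{2}(odd_double_half k) leq_addl.
set x := expR eps.
have x1 : 1 <= x by have := expR_ge1Dx eps; rewrite /x; lra.
have eT : expR ((k%:R - 2 * i%:R) * eps) = x ^+ (k - 2 * i).
  by rewrite -expRM_natl natrB // natrM.
rewrite eT.
have nz : (1 + x) ^+ k != 0 by rewrite expf_neq0 // gt_eqF //; lra.
have hc := @sig_closed R x delta x1 k 1 (- x ^+ (k - 2 * i)).
rewrite (@rho_final R x delta x1 hd0 hd1 k i h2i) in hc.
have ed : delta_i eps k i = (\sum_(0 <= l < i) 'C(k, l)%:R *
    (x ^+ (k - l) - x ^+ (k - 2 * i + l))) / (1 + x) ^+ k.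
  rewrite /delta_i big_mkord; congr (_ / _); apply: eq_bigr => l _.
  have lk : (l <= k)%N by apply: (leq_trans (ltnW (ltn_ord l))); lia.
  rewrite -!expRM_natl natrB // natrD natrB // natrM.
  by [].
rewrite ed.
apply: (mulIf nz); rewrite hc; field.
exact: nz.
Qed.

Lemma int_bound d (T : measurableType d) (R : realType) (PR : probability T R)
  (F0 F1 : T -> R) (c dl : R) : 0 <= c -> 0 <= dl ->
  measurable_fun setT F0 -> measurable_fun setT F1 ->
  (forall r, 0 <= F0 r) -> (forall r, 0 <= F1 r) ->
  (forall r, F0 r <= c * F1 r + dl) ->
  (\int[PR]_r (F0 r)%:E <= c%:E * \int[PR]_r (F1 r)%:E + dl%:E)%E.
Proof.
move=> c0 dl0 m0 m1 F00 F10 h.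
have I1 : (\int[PR]_y ((fun _ : T => 1%R) y)%:E = 1)%E.
  rewrite integral_cst // mul1e; exact: probability_setT.
apply: (@le_trans _ _ (\int[PR]_r ((c * F1 r + dl * (fun _ : T => 1%R) r)%:E))%E).
  apply: ge0_le_integral => //.
  - by move=> r _; rewrite lee_fin.
  - exact/measurable_EFinP.
  - by apply/measurable_EFinP; mfun.
  - by move=> r _; rewrite lee_fin mulr1; exact: h.
rewrite (@int_lin2 _ _ _ _ c dl F1 (fun _ : T => 1%R)) //.
- by rewrite I1 mule1.
all: try (by move=> ?; rewrite ler01).
all: exact: measurable_cst.
Qed.

Theorem theorem6 (R : realType) (DB Q : Type) (nbr : DB -> DB -> Prop)
    (nbr_sym : forall D D' : DB, nbr D D' -> nbr D' D)
    (dY : measure_display) (Y : measurableType dY)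
    (eps delta : R) (k : nat)
    (heps : 0 <= eps) (hdelta0 : 0 <= delta) (hdelta1 : delta <= 1)
    (hk : (1 <= k)%N) (i : nat) (hi : (i <= k./2)%N) :
  @DP_under_composition R DB Q dY Y nbr eps delta k
    ((k%:R - 2 * i%:R) * eps)
    (1 - (1 - delta) ^+ k * (1 - delta_i eps k i)).
Proof.
move=> dO Omega PR A hA S mS.
have hsig := @sig_delta R eps delta k i heps hdelta0 hdelta1 hi.
set T := expR ((k%:R - 2 * i%:R) * eps) in hsig *.
set dlt := 1 - (1 - delta) ^+ k * (1 - delta_i eps k i) in hsig *.
have x1 : 1 <= expR eps by have := expR_ge1Dx eps; lra.
have T0 : 0 <= T by rewrite /T expR_ge0.
have dlt0 : 0 <= dlt.
  rewrite -hsig; apply: (@sig_ge0 R (expR eps) delta x1 hdelta0 hdelta1); lra.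
pose g := fun (r : Omega) (ys : seq Y) => match insub ys : option (k.-tuple Y) with
  | Some t => (\1_S (r, t) : R) | None => 0 end.
pose f := fun (r : Omega) (ys : seq Y) => match insub ys : option (k.-tuple Y) with
  | Some t => (\1_S (r, t) : R)%:E | None => 0%E end.
have eVP b : view_prob PR A b S = (\int[PR]_r view_int A b k r [::] f)%E by [].
have hf r ys : f r ys = (g r ys)%:E by rewrite /f /g; case: insub.
have g01 r ys : 0 <= g r ys <= 1.
  rewrite /g; case: insub => [t|]; last by rewrite lexx ler01.
  by rewrite indicE; case: (_ \in _); rewrite ?lexx ?ler01.
have mf : measurable_fun setT (fun p : Omega * k.-tuple Y => f p.1 p.2).
  rewrite (_ : (fun p : Omega * k.-tuple Y => f p.1 p.2) = (fun p => (\1_S p : R)%:E)).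
    by apply/measurable_EFinP; exact: measurable_indic.
  by apply: boolp.funext => -[r t]; rewrite /f /= valK.
have f0 r ys : (0 <= f r ys)%E by rewrite hf lee_fin; case/andP: (g01 r ys).
pose F b r := fine (view_int A b k r [::] f).
have reg r := @view_region R DB Q dY Y dO Omega nbr eps delta k nbr_sym heps hdelta0 hdelta1
  A hA f g hf g01 mf k 0 [tuple] r (add0n k).
have hV b r : view_int A b k r [::] f = (F b r)%:E by exact: ((reg r).1 b).
have hIn r : inR (expR eps) delta k (F false r) (F true r) by exact: (reg r).2.
have mF b : measurable_fun setT (F b).
  have mV := @view_meas R DB Q dY Y dO Omega nbr eps delta k A hA f f0 mf b k 0 (add0n k).
  have hp : measurable_fun setT (fun r : Omega => (r, [tuple] : 0.-tuple Y)).
    by apply: measurable_fun_pair => //; exact: measurable_cst.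
  exact: (measurableT_comp (fine_measurable measurableT) (measurableT_comp mV hp)).
have Fb b r : 0 <= F b r by case: (hIn r) => /andP[? _] /andP[? _] _; case: b.
have eI b : (\int[PR]_r view_int A b k r [::] f = \int[PR]_r (F b r)%:E)%E.
  by apply: eq_integral => r _; exact: hV.
rewrite !eVP !eI.
split; apply: int_bound => // r; case: (hIn r) => _ _ /(_ 1 (- T) ler01) [].
- by rewrite oppr_le0.
- by move=> h _; rewrite hsig in h; lra.
- by rewrite oppr_le0.
- by move=> _ h; rewrite hsig in h; lra.
Qed.
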